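(* Let $\mathcal A=\{A_i\}_{i\in\Lambda}$ be a finite collection of $SL_2(\mathbb R)$ matrices with a strictly invariant multicone $U$, let $\Phi=\{\varphi_{A_i}\}_{i\in\Lambda}$ be the induced IFS on $\mathbb{RP}^1$, and let $p=(p_i)_{i\in\Lambda}$ be a probability vector with all $p_i>0$. Then $\chi_{\Phi,p}=2\chi_{\mathcal A,p}$.
   Context: $\mathbb{RP}^1\cong[0,\pi)\cong\mathbb R/\pi\mathbb Z$; $\varphi_A$ is the induced action and derivatives are in this coordinate. A strictly invariant multicone is a proper nonempty open $U\subset\mathbb{RP}^1$ with finitely many components having disjoint closures and $\varphi_{A_i}(\overline U)\subset U$ for all $i$. Write $A_{\mathbf i}=A_{i_1}\cdots A_{i_n}$ and $\varphi_{\mathbf i}=\varphi_{A_{i_1}}\circ\cdots\circ\varphi_{A_{i_n}}$. With $i_1,i_2,\ldots$ chosen i.i.d. according to $p$: $\chi_{\mathcal A,p}$ is the almost sure value of $\lim_n\frac1n\log\|A_{i_1\cdots i_n}\|$, and, for a fixed $x_0\in U$, $\chi_{\Phi,p}$ is the almost sure value of $\lim_n-\frac1n\log|(\varphi_{i_1\cdots i_n})'(x_0)|$. *)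

(* Defs.v *)
From HB Require Import structures.
From mathcomp Require Import all_boot all_order all_algebra.
From mathcomp Require Import all_classical all_reals all_analysis.
Set Implicit Arguments. Unset Strict Implicit. Unset Printing Implicit Defensive.
Import Order.TTheory GRing.Theory Num.Theory.
Import numFieldNormedType.Exports.
Local Open Scope classical_set_scope.
Local Open Scope ring_scope.

Section Defs.
Variable R : realType.

Definition vnorm (v : 'cV[R]_2) : R := Num.sqrt (v 0 0 ^+ 2 + v 1 0 ^+ 2).

Definition opnorm (M : 'M[R]_2) : R :=
  sup [set vnorm (M *m v) | v in [set v : 'cV[R]_2 | vnorm v = 1]].

(* Unit vector of angle theta: the line it spans is the point theta of
   RP^1 = R / pi Z. *)
Definition dirv (t : R) : 'cV[R]_2 := \col_i (if i == 0 then cos t else sin t).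

(* Representative in [0, pi) of the line through (a, b) <> 0. *)
Definition line_angle (a b : R) : R :=
  if a == 0 then pi / 2
  else let t := atan (b / a) in if t < 0 then t + pi else t.

(* Induced action phi_M on RP^1 = [0,pi) = R / pi Z (as a pi-periodic
   function R -> [0, pi)). *)
Definition phiA (M : 'M[R]_2) (t : R) : R :=
  let w := M *m dirv t in line_angle (w 0 0) (w 1 0).

Definition phiw (k : nat) (A : 'I_k -> 'M[R]_2) (w : nat -> 'I_k) (n : nat)
  : R -> R := foldr (fun j f => phiA (A (w j)) \o f) id (iota 0 n).

Definition Aw (k : nat) (A : 'I_k -> 'M[R]_2) (w : nat -> 'I_k) (n : nat)
  : 'M[R]_2 := \prod_(j < n) A (w j).

(* Reduction of a difference of coordinates modulo pi into [-pi/2, pi/2). *)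
Definition cwrap (d : R) : R := d - pi * (Num.floor (d / pi + 2^-1))%:~R.

(* Derivative at x of a map f of R / pi Z (given in the coordinate [0,pi),
   i.e. by any representative function R -> R), computed in the coordinate:
   the derivative at 0 of h |-> (f (x + h) - f x) mod pi. *)
Definition circ_deriv (f : R -> R) (x : R) : R :=
  derive1 (fun h => cwrap (f (x + h) - f x)) 0.

(* Strictly invariant multicone, written in the coordinate R / pi Z:
   U (a pi-periodic subset of R) is a finite nonempty union of open arcs
   (a_j, b_j) mod pi whose closures are pairwise disjoint (in particular
   each arc is proper, so U is proper), and phi_{A_i}(closure U) c U. *)
Definition multicone (k : nat) (A : 'I_k -> 'M[R]_2) (U : set R) : Prop :=
  (exists (n : nat) (a b : 'I_n -> R),
    [/\ (0 < n)%N,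
        (forall j, a j < b j),
        (forall x, U x <-> exists j (m : int),
            a j + m%:~R * pi < x /\ x < b j + m%:~R * pi) &
        (forall (j j' : 'I_n) (m : int), (j != j') || (m != 0) ->
            forall x, ~ (a j <= x /\ x <= b j /\
                         a j' + m%:~R * pi <= x /\ x <= b j' + m%:~R * pi))])
  /\ (forall i x, closure U x -> U (phiA (A i) x)).

Definition iid_law (d : measure_display) (T : measurableType d)
  (P : probability T R) (k : nat) (p : 'I_k -> R) (X : nat -> T -> 'I_k) : Prop :=
  (forall n i, measurable (X n @^-1` [set i])) /\
  (forall (n : nat) (w : 'I_n -> 'I_k),
     P [set t | forall j : 'I_n, X j t = w j] = (\prod_(j < n) p (w j))%:E).

End Defs.

(* Main.v *)
Require Import Defs.
From HB Require Import structures.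
From mathcomp Require Import all_boot all_order all_algebra.
From mathcomp Require Import all_classical all_reals all_analysis.
From mathcomp Require Import ring lra.
From Stdlib Require Import Classical.
Set Implicit Arguments. Unset Strict Implicit.
Import Order.TTheory GRing.Theory Num.Theory.
Import numFieldNormedType.Exports.
Local Open Scope classical_set_scope.
Local Open Scope ring_scope.

Section P1.
Variable R : realType.
Implicit Types (M : 'M[R]_2) (u v w : 'cV[R]_2).

Lemma ord2_1 : (lift ord0 ord0 : 'I_2) = 1. Proof. by apply/val_inj. Qed.
Lemma mxv0 M v : (M *m v) 0 0 = M 0 0 * v 0 0 + M 0 1 * v 1 0.
Proof. by rewrite !mxE !big_ord_recl big_ord0 addr0 ord2_1. Qed.
Lemma mxv1 M v : (M *m v) 1 0 = M 1 0 * v 0 0 + M 1 1 * v 1 0.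
Proof. by rewrite !mxE !big_ord_recl big_ord0 addr0 ord2_1. Qed.
Lemma det22 M : \det M = M 0 0 * M 1 1 - M 0 1 * M 1 0.
Proof.
rewrite (expand_det_row _ 0) !big_ord_recl big_ord0 addr0 /cofactor !det_mx11 !mxE /=.
rewrite ord2_1.
have -> : (lift 1 0 : 'I_2) = 0 by apply/val_inj.
by rewrite /bump /= expr0 expr1 mul1r mulN1r mulrN.
Qed.
Lemma dirv0 (t : R) : dirv t 0 0 = cos t. Proof. by rewrite mxE. Qed.
Lemma dirv1 (t : R) : dirv t 1 0 = sin t. Proof. by rewrite mxE. Qed.
Lemma scv (a : R) v i : (a *: v) i 0 = a * v i 0. Proof. by rewrite mxE. Qed.

Lemma col2P u v : u 0 0 = v 0 0 -> u 1 0 = v 1 0 -> u = v.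
Proof.
move=> h0 h1; apply/matrixP => i j; rewrite (ord1 j).
case: i => [[|[|//]]] Hi.
- by have -> : Ordinal Hi = 0 by apply/val_inj.
- by have -> : Ordinal Hi = 1 by apply/val_inj.
Qed.

Lemma col2_neq0 v : v != 0 -> (v 0 0 != 0) || (v 1 0 != 0).
Proof.
move=> hv; rewrite -negb_and; apply/negP => /andP [/eqP h0 /eqP h1].
by move/eqP: hv; apply; apply: col2P; rewrite mxE.
Qed.

Definition det2 u v := u 0 0 * v 1 0 - u 1 0 * v 0 0.
Definition ang v := line_angle (v 0 0) (v 1 0).

Lemma det2M M u v : det2 (M *m u) (M *m v) = \det M * det2 u v.
Proof. rewrite /det2 !mxv0 !mxv1 det22; ring. Qed.

Lemma det2_dirv (s t : R) : det2 (dirv s) (dirv t) = sin (t - s).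
Proof. by rewrite /det2 !dirv0 !dirv1 sinB; ring. Qed.

Lemma det2Zl (a : R) u v : det2 (a *: u) v = a * det2 u v.
Proof. rewrite /det2 !scv; ring. Qed.
Lemma det2Zr (a : R) u v : det2 u (a *: v) = a * det2 u v.
Proof. rewrite /det2 !scv; ring. Qed.

Lemma vnorm_ge0 v : 0 <= vnorm v. Proof. exact: sqrtr_ge0. Qed.
Lemma vnorm_dirv (t : R) : vnorm (dirv t) = 1.
Proof. by rewrite /vnorm dirv0 dirv1 cos2Dsin2 sqrtr1. Qed.
Lemma vnormZ (a : R) v : vnorm (a *: v) = `|a| * vnorm v.
Proof.
rewrite /vnorm !scv !exprMn -mulrDr sqrtrM ?sqr_ge0 //.
by rewrite sqrtr_sqr.
Qed.
Lemma vnorm_gt0 v : v != 0 -> 0 < vnorm v.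
Proof.
move=> /col2_neq0 h; rewrite /vnorm sqrtr_gt0.
case/orP: h => h.
  by apply: ltr_pwDl; [rewrite exprn_even_gt0 | rewrite sqr_ge0].
by apply: ltr_wpDl; [rewrite sqr_ge0 | rewrite exprn_even_gt0].
Qed.
Lemma comp_le v i : `|v i 0| <= vnorm v.
Proof.
have hi : i = 0 \/ i = 1.
  case: i => [[|[|//]]] Hi; [left|right]; exact/val_inj.
rewrite /vnorm -sqrtr_sqr ler_sqrt ?addr_ge0 ?sqr_ge0 //.
case: hi => ->; [by rewrite lerDl sqr_ge0 | by rewrite lerDr sqr_ge0].
Qed.
Lemma vnorm_le_sum v : vnorm v <= `|v 0 0| + `|v 1 0|.
Proof.
rewrite /vnorm -[X in _ <= X]ger0_norm ?addr_ge0 // -sqrtr_sqr ler_sqrt ?sqr_ge0 //.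
rewrite sqrrD !real_normK ?num_real // -addrA [_ *+ 2 + _]addrC addrA lerDl.
by rewrite mulrn_wge0 // mulr_ge0.
Qed.

Lemma det2_le u v : `|det2 u v| <= vnorm u * vnorm v.
Proof.
rewrite /vnorm -sqrtrM ?addr_ge0 ?sqr_ge0 // -sqrtr_sqr ler_sqrt ?mulr_ge0 ?addr_ge0 ?sqr_ge0 //.
rewrite /det2.
have -> : (u 0 0 ^+ 2 + u 1 0 ^+ 2) * (v 0 0 ^+ 2 + v 1 0 ^+ 2) =
  (u 0 0 * v 1 0 - u 1 0 * v 0 0) ^+ 2 + (u 0 0 * v 0 0 + u 1 0 * v 1 0) ^+ 2 by ring.
by rewrite lerDl sqr_ge0.
Qed.

Definition mb M := `|M 0 0| + `|M 0 1| + `|M 1 0| + `|M 1 1|.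
Lemma mb_ge0 M : 0 <= mb M.
Proof. by rewrite /mb !addr_ge0. Qed.
Lemma vnorm_mul_le M v : vnorm (M *m v) <= mb M * vnorm v.
Proof.
apply: (le_trans (vnorm_le_sum _)); rewrite mxv0 mxv1.
have h0 := comp_le v 0; have h1 := comp_le v 1.
have a1 : `|M 0 0 * v 0 0 + M 0 1 * v 1 0| <= `|M 0 0| * vnorm v + `|M 0 1| * vnorm v.
  apply: (le_trans (ler_normD _ _)); rewrite !normrM.
  by apply: lerD; apply: ler_wpM2l.
have a2 : `|M 1 0 * v 0 0 + M 1 1 * v 1 0| <= `|M 1 0| * vnorm v + `|M 1 1| * vnorm v.
  apply: (le_trans (ler_normD _ _)); rewrite !normrM.
  by apply: lerD; apply: ler_wpM2l.
apply: (le_trans (lerD a1 a2)); rewrite le_eqVlt; apply/orP; left; apply/eqP; rewrite /mb; ring.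
Qed.

Lemma decomp2 u v z : det2 u v != 0 ->
  z = (det2 z v / det2 u v) *: u + (det2 u z / det2 u v) *: v.
Proof.
rewrite /det2 => h; apply: col2P; rewrite !mxE; move: h;
  move: (u 0 0) (u 1 0) (v 0 0) (v 1 0) (z 0 0) (z 1 0) => a b c d e f h; by field.
Qed.

Lemma opnorm_ub M v : vnorm v = 1 -> vnorm (M *m v) <= opnorm M.
Proof.
move=> hv; apply: sup_upper_bound; last by exists v.
split; first by exists (vnorm (M *m v)), v.
exists (mb M) => _ [w /= hw <-]; by rewrite -[mb M]mulr1 -hw vnorm_mul_le.
Qed.

Lemma opnorm_le M (K : R) : (forall v, vnorm v = 1 -> vnorm (M *m v) <= K) ->
  opnorm M <= K.
Proof.
move=> h; apply: ge_sup; first by exists (vnorm (M *m dirv 0)), (dirv 0) => //=; rewrite vnorm_dirv.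
by move=> _ [w /= hw <-]; apply: h.
Qed.

End P1.

Section P2.
Variable R : realType.
Implicit Types (z t s : R).

Lemma shift_nat z (n : nat) : exists e : R, e * e = 1 /\
  sin (z + pi *+ n) = e * sin z /\ cos (z + pi *+ n) = e * cos z.
Proof.
exists ((-1) ^+ n); split; first by rewrite -exprMn mulrNN mulr1 expr1n.
by rewrite (alternatingn (@sinDpi R)) (alternatingn (@cosDpi R)).
Qed.

Lemma shift_int z (m : int) : exists e : R, e * e = 1 /\
  sin (z + m%:~R * pi) = e * sin z /\ cos (z + m%:~R * pi) = e * cos z.
Proof.
case: m => n.
  by rewrite -pmulrn mulr_natl; exact: shift_nat.
have [e [ee [hs hc]]] := shift_nat (z + (Negz n)%:~R * pi) n.+1.
have E : z + (Negz n)%:~R * pi + pi *+ n.+1 = z.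
  rewrite NegzE rmorphN /= mulNr -pmulrn mulr_natl. by rewrite addrNK.
rewrite E in hs hc; exists e; split => //; split.
  by rewrite hs mulrA ee mul1r.
by rewrite hc mulrA ee mul1r.
Qed.

Lemma red_bounds z :
  - (pi / 2) <= z - (Num.floor (z / pi + 2^-1))%:~R * pi < pi / 2.
Proof.
have := pi_gt0 R; move: (pi : R) => p hp.
set m := Num.floor _.
have h1 : m%:~R <= z / p + 2^-1 := floor_le _.
have h2 : z / p + 2^-1 < (m + 1)%:~R := floorD1_gt _.
rewrite intrD in h2.
have e : (z / p + 2^-1) * p = z + p / 2.
  by rewrite mulrDl divfK ?(lt0r_neq0 hp) // mulrC.
have h1' : m%:~R * p <= z + p / 2 by rewrite -e ler_pM2r.
have h2' : z + p / 2 < (m%:~R + 1) * p by rewrite -e ltr_pM2r.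
rewrite mulrDl mul1r in h2'.
move: h1' h2'; move: (m%:~R * p) => P; move=> *; apply/andP; split; lra.
Qed.

Lemma cwrapE z : cwrap z = z - (Num.floor (z / pi + 2^-1))%:~R * pi.
Proof. by rewrite /cwrap mulrC. Qed.

Lemma sin0_int z : sin z = 0 -> exists m : int, z = m%:~R * pi.
Proof.
move=> hz.
set m := Num.floor (z / pi + 2^-1).
have /andP[b1 b2] := red_bounds z.
have [e [ee [hs _]]] := shift_int z (- m).
rewrite hz mulr0 mulrNz mulNr in hs.
have : sin (z - m%:~R * pi) = sin 0 by rewrite hs sin0.
move/sin_inj => h.
exists m; apply/eqP; rewrite -subr_eq0; apply/eqP; apply: h.
- by rewrite in_itv /= b1 ltW.
- by rewrite in_itv /= oppr_le0 divr_ge0 ?pi_ge0.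
Qed.
End P2.

Section P3.
Variable R : realType.
Implicit Types (z t s : R).

Lemma e_norm1 (e : R) : e * e = 1 -> `|e| = 1.
Proof.
by move=> /eqP; rewrite -expr2 sqrf_eq1 => /orP[]/eqP->; rewrite ?normrN normr1.
Qed.

Lemma e_neq0 (e : R) : e * e = 1 -> e != 0.
Proof. by move=> h; apply/eqP => e0; move: h; rewrite e0 mul0r => /eqP; rewrite eq_sym oner_eq0. Qed.

Lemma red_sin z : let m := Num.floor (z / pi + 2^-1) in
  `|sin (z - m%:~R * pi)| = `|sin z| /\
  (cos z != 0 -> tan (z - m%:~R * pi) = tan z /\ cos (z - m%:~R * pi) != 0).
Proof.
move=> m.
have [e [ee [hs hc]]] := @shift_int R z (- m).
rewrite mulrNz mulNr in hs hc.
rewrite hs hc normrM (@e_norm1 e ee) mul1r; split => // cz.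
split; last by rewrite mulf_neq0 // (@e_neq0 e ee).
rewrite /tan hs hc invfM mulrACA divff ?(@e_neq0 e ee) // mul1r.
by [].
Qed.

Lemma gap (S : set R) s : (forall t (m : int), S t -> S (t + m%:~R * pi)) ->
  (exists2 r, 0 < r & forall u, `|u - s| < r -> S u) ->
  exists2 d, 0 < d & forall t, ~ S t -> d <= `|sin (t - s)|.
Proof.
move=> per [r r0 hr].
have hp := pi_gt0 R.
set r' := Num.min r (pi / 2).
have r'0 : 0 < r' by rewrite lt_min r0 divr_gt0.
have r'le : r' <= pi / 2 by rewrite ge_min lexx orbT.
have r'ler : r' <= r by rewrite ge_min lexx.
exists (sin r').
  apply: sin_gt0_pi; rewrite r'0 /=; apply: (le_lt_trans r'le); lra.
move=> t nSt; rewrite leNgt; apply/negP => hlt.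
set z := t - s.
set m := Num.floor (z / pi + 2^-1).
have /andP[b1 b2] := @red_bounds R z.
have [hsin _] := @red_sin z.
rewrite -/m in b1 b2 hsin.
set z' := z - m%:~R * pi in b1 b2 hsin.
have I1 : z' \in `[(- (pi / 2)), pi / 2] by rewrite in_itv /= b1 ltW.
have I2 : r' \in `[(- (pi / 2)), pi / 2].
  by rewrite in_itv /=; apply/andP; split; lra.
have I3 : - r' \in `[(- (pi / 2)), pi / 2].
  by rewrite in_itv /=; apply/andP; split; lra.
have hz' : `|z'| < r'.
  rewrite ltr_norml; apply/andP; split.
    rewrite ltNge; apply/negP => hle.
    have : sin z' <= sin (- r').
      rewrite leNgt; apply/negP; rewrite ltr_sin // => h; lra.
    rewrite sinN => h2.
    have : sin r' <= `|sin z'|.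
      by rewrite -normrN; apply: (le_trans _ (ler_norm _)); lra.
    by rewrite hsin; lra.
  rewrite ltNge; apply/negP => hle.
  have : sin r' <= sin z'.
    rewrite leNgt; apply/negP; rewrite ltr_sin // => h; lra.
  move=> h2; have : sin r' <= `|sin z'| by apply: (le_trans h2); rewrite ler_norm.
  by rewrite hsin; lra.
apply: nSt.
have : S (t - m%:~R * pi).
  apply: hr; rewrite (_ : t - m%:~R * pi - s = z'); first by apply: (lt_le_trans hz').
  by rewrite /z' /z; ring.
move/(per _ m); by rewrite subrK.
Qed.

End P3.

Section P4.
Variable R : realType.
Implicit Types (z t s a b : R) (u v : 'cV[R]_2).

Lemma cwrap_atan z : cos z != 0 -> cwrap z = atan (tan z).
Proof.
move=> cz; rewrite cwrapE.
have /andP[b1 b2] := @red_bounds R z.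
have [_ h] := @red_sin R z; have [ht hc] := h cz.
set z' := z - _ in b1 b2 ht hc *.
have b1' : - (pi / 2) < z'.
  rewrite lt_neqAle b1 andbT; apply/eqP => e.
  by move: hc; rewrite -e cosN cos_pihalf eqxx.
by rewrite -ht tanK // in_itv /= b1' b2.
Qed.

Lemma LA1 a b : (a != 0) || (b != 0) ->
  exists l, l != 0 /\ a = l * cos (line_angle a b) /\ b = l * sin (line_angle a b).
Proof.
move=> hab; rewrite /line_angle; case: eqP => [a0|/eqP a0].
  exists b; rewrite cos_pihalf sin_pihalf mulr0 mulr1; split => //.
  by move: hab; rewrite a0 eqxx.
set t := atan (b / a).
have ct : 0 < cos t by apply: cos_gt0_pihalf; rewrite atan_gtNpi2 atan_ltpi2.
have st : sin t = b / a * cos t.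
  by rewrite -[b / a]atanK -/t /tan divfK // lt0r_neq0.
case: ifP => _.
  exists (- (a / cos t)); rewrite cosDpi sinDpi st; split.
    by rewrite oppr_eq0 mulf_neq0 // invr_neq0 // lt0r_neq0.
  split; field; rewrite ?a0 ?lt0r_neq0 //.
exists (a / cos t); rewrite st; split.
  by rewrite mulf_neq0 // invr_neq0 // lt0r_neq0.
split; field; rewrite ?a0 ?lt0r_neq0 //.
Qed.

Lemma LA2 l a b : l != 0 -> line_angle (l * a) (l * b) = line_angle a b.
Proof.
move=> l0; rewrite /line_angle mulf_eq0 (negbTE l0) /=.
case: eqP => // /eqP a0.
by have -> : l * b / (l * a) = b / a by field; rewrite a0 l0.
Qed.

Lemma ang_dec v : v != 0 -> exists l, l != 0 /\ v = l *: dirv (ang v).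
Proof.
move=> /(@col2_neq0 R) /LA1 [l [l0 [h0 h1]]]; exists l; split => //.
by apply: (@col2P R); rewrite scv ?dirv0 ?dirv1.
Qed.

Lemma ang_scale l v : l != 0 -> ang (l *: v) = ang v.
Proof. by move=> l0; rewrite /ang !scv LA2. Qed.

Lemma dirv_neq0 t : dirv t != 0 :> 'cV[R]_2.
Proof.
apply/eqP => h; have := @vnorm_dirv R t; rewrite h /vnorm !mxE expr0n /= addr0 sqrtr0.
by move/eqP; rewrite eq_sym oner_eq0.
Qed.

Lemma ang_dirv t : exists m : int, ang (dirv t) = t + m%:~R * pi.
Proof.
have [l [l0 e]] := ang_dec (dirv_neq0 t).
have : sin (t - ang (dirv t)) = 0.
  rewrite -det2_dirv {2}e det2Zr /det2 !dirv0 !dirv1; ring.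
move/sin0_int => [m hm]; exists (- m).
by rewrite mulrNz mulNr -hm; ring.
Qed.

Lemma det2_ang u v : u != 0 -> v != 0 ->
  `|det2 u v| = vnorm u * vnorm v * `|sin (ang v - ang u)|.
Proof.
move=> u0 v0.
have [l [l0 eu]] := ang_dec u0; have [l' [l0' ev]] := ang_dec v0.
set au := ang u in eu *; set av := ang v in ev *.
rewrite eu ev det2Zl det2Zr det2_dirv !vnormZ !vnorm_dirv !normrM; ring.
Qed.

End P4.

Section P5.
Variable R : realType.
Implicit Types (z t s a b h x : R) (u v w : 'cV[R]_2) (M : 'M[R]_2).

Lemma unit_of_det M : \det M = 1 -> M \in unitmx.
Proof. by move=> hM; rewrite unitmxE hM unitr1. Qed.

Lemma mul_neq0 M v : \det M = 1 -> v != 0 -> M *m v != 0.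
Proof.
move=> hM v0; apply/eqP => e; move/eqP: v0; apply.
by rewrite -(mulKmx (unit_of_det hM) v) e mulmx0.
Qed.

Definition dot2 u v := u 0 0 * v 0 0 + u 1 0 * v 1 0.

Lemma dot2_dec u v : u != 0 -> v != 0 ->
  exists l, l != 0 /\ det2 u v = l * sin (ang v - ang u) /\
                      dot2 u v = l * cos (ang v - ang u).
Proof.
move=> u0 v0.
have [l [l0 eu]] := ang_dec u0; have [l' [l0' ev]] := ang_dec v0.
set au := ang u in eu *; set av := ang v in ev *.
exists (l * l'); split; first by rewrite mulf_neq0.
rewrite eu ev det2Zl det2Zr det2_dirv; split; first by ring.
by rewrite /dot2 !scv !dirv0 !dirv1 cosB; ring.
Qed.

Lemma local_eq M x h : \det M = 1 ->
  dot2 (M *m dirv x) (M *m dirv (x + h)) != 0 ->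
  cwrap (ang (M *m dirv (x + h)) - ang (M *m dirv x)) =
  atan (sin h / dot2 (M *m dirv x) (M *m dirv (x + h))).
Proof.
move=> hM hq.
have u0 := mul_neq0 hM (dirv_neq0 x).
have w0 := mul_neq0 hM (dirv_neq0 (x + h)).
have [l [l0 [hd hdot]]] := dot2_dec u0 w0.
have hdet : det2 (M *m dirv x) (M *m dirv (x + h)) = sin h.
  by rewrite det2M hM mul1r det2_dirv addrC addKr.
rewrite hdot; rewrite hdot in hq.
have cz : cos (ang (M *m dirv (x + h)) - ang (M *m dirv x)) != 0.
  by apply: contraNneq hq => ->; rewrite mulr0.
rewrite cwrap_atan //; congr atan.
by rewrite -hdet hd /tan [X in _ = X]mulrC invfM mulrACA mulVf // mul1r mulrC.
Qed.

End P5.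

Section P6.
Variable R : realType.
Implicit Types (z t s a b h x : R) (u v w : 'cV[R]_2) (M : 'M[R]_2).

Lemma dot2_pos u : u != 0 -> 0 < dot2 u u.
Proof.
move=> u0; have := vnorm_gt0 u0; rewrite /vnorm sqrtr_gt0 /dot2.
by rewrite !expr2.
Qed.

Lemma circ_deriv_ang M x : \det M = 1 ->
  circ_deriv (fun t => ang (M *m dirv t)) x =
  (dot2 (M *m dirv x) (M *m dirv x))^-1.
Proof.
move=> hM.
set u := M *m dirv x.
set al := dot2 u u.
set be := dot2 u (M *m dirv (x + pi / 2)).
have al0 : 0 < al by apply: dot2_pos; apply: mul_neq0 => //; exact: dirv_neq0.
pose Q : R -> R := (al \*: cos) + (be \*: sin).
have QQ h : Q h = al * cos h + be * sin h by [].
have QE h : dot2 u (M *m dirv (x + h)) = Q h.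
  rewrite QQ /al /be /dot2 !mxv0 !mxv1 !dirv0 !dirv1.
  rewrite cosD sinD cosDpihalf sinDpihalf; ring.
have dQ : derivable Q 0 1.
  by apply: derivableD; apply: derivableZ; [exact: derivable_cos | exact: derivable_sin].
have Q0 : Q 0 = al by rewrite QQ cos0 sin0 mulr0 addr0 mulr1.
have cQ : Q @ 0 --> Q 0.
  by apply/differentiable_continuous/derivable1_diffP.
have nQ : \forall h \near 0, Q h != 0.
  by apply: cvgr_neq0 cQ _; rewrite Q0 lt0r_neq0.
pose F : R -> R := sin * (fun h => (Q h)^-1).
have dF : derivable F 0 1.
  apply: derivableM; first exact: derivable_sin.
  by apply: derivableV => //; rewrite Q0 lt0r_neq0.
rewrite /circ_deriv.
have -> : derive1 (fun h => cwrap (ang (M *m dirv (x + h)) - ang (M *m dirv x))) 0 =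
          derive1 (atan \o F) 0.
  rewrite !derive1E; apply: near_eq_derive.
  near=> h.
  rewrite local_eq //; last by rewrite QE; near: h.
  by rewrite QE.
rewrite derive1_comp; [| exact: dF | exact: derivable_atan].
have F0 : F 0 = 0 by change (sin 0 * (Q 0)^-1 = 0); rewrite sin0 mul0r.
rewrite derive1_atan F0 expr0n /= addr0 invr1 mul1r.
rewrite derive1E deriveM //; last by apply: derivableV => //; rewrite Q0 lt0r_neq0.
  rewrite sin0 scale0r add0r derive_val cos0 Q0 /=.
  by rewrite [_ *: _]mulr1.
Unshelve. all: by end_near.
Qed.

End P6.

Section P7.
Variable R : realType.

Lemma notcl_local (U : set R) s : ~ closure U s ->
  exists2 r, 0 < r & forall y : R, `|y - s| < r -> ~ U y.
Proof.
move=> ncl; apply: NNPP => hn; apply: ncl => B /nbhs_ballP [e e0 hB].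
apply: NNPP => hne; apply: hn; exists e => // y hu Uu; apply: hne.
exists y; split => //; apply: hB.
by rewrite -ball_normE /ball_ /= distrC.
Qed.

Lemma foldr_comp (g : nat -> R -> R) (hh : R -> R) (s : seq nat) t :
  foldr (fun j f => g j \o f) hh s t = foldr (fun j f => g j \o f) id s (hh t).
Proof. by elim: s t => //= j s IH t; rewrite IH. Qed.

Variable k : nat.
Implicit Types (z t s a b h x : R) (u v : 'cV[R]_2) (M : 'M[R]_2) (w : nat -> 'I_k).
Variable A : 'I_k -> 'M[R]_2.
Hypothesis hSL : forall i, \det (A i) = 1.

Lemma phiw_S w n t : phiw A w n.+1 t = phiw A w n (phiA (A (w n)) t).
Proof. by rewrite /phiw -addn1 iotaD foldr_cat /= foldr_comp. Qed.

Lemma Aw_S w n : Aw A w n.+1 = Aw A w n *m A (w n).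
Proof. by rewrite /Aw big_ord_recr /= mulmxE. Qed.

Lemma Aw_Sl w n : Aw A w n.+1 = A (w 0%N) *m Aw A (fun j => w j.+1) n.
Proof. by rewrite /Aw big_ord_recl /= mulmxE. Qed.

Lemma Aw_0 w : Aw A w 0 = 1%:M.
Proof. by rewrite /Aw big_ord0. Qed.

Lemma det_Aw w n : \det (Aw A w n) = 1.
Proof.
elim: n => [|n IH]; first by rewrite Aw_0 det1.
by rewrite Aw_S det_mulmx IH hSL mulr1.
Qed.

Lemma ang_mul M v : v != 0 -> ang (M *m dirv (ang v)) = ang (M *m v).
Proof.
move=> v0; have [l [l0 e]] := ang_dec v0.
rewrite {2}e -scalemxAr ang_scale //.
Qed.

Lemma phiw_ang w n t : phiw A w n.+1 t = ang (Aw A w n.+1 *m dirv t).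
Proof.
elim: n t => [|n IH] t.
  by rewrite phiw_S Aw_S Aw_0 mul1mx.
rewrite phiw_S IH /phiA ang_mul; last exact: mul_neq0 (dirv_neq0 t).
by rewrite [Aw A w n.+2]Aw_S mulmxA.
Qed.

End P7.

Section P8.
Variable R : realType.
Implicit Types (z t s a b h x : R) (u v : 'cV[R]_2) (M : 'M[R]_2).

Lemma dot2_le u v : dot2 u v <= vnorm u * vnorm v.
Proof.
apply: (le_trans (ler_norm _)).
rewrite /vnorm -sqrtrM ?addr_ge0 ?sqr_ge0 // -sqrtr_sqr ler_sqrt ?mulr_ge0 ?addr_ge0 ?sqr_ge0 //.
rewrite /dot2.
have -> : (u 0 0 ^+ 2 + u 1 0 ^+ 2) * (v 0 0 ^+ 2 + v 1 0 ^+ 2) =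
  (u 0 0 * v 1 0 - u 1 0 * v 0 0) ^+ 2 + (u 0 0 * v 0 0 + u 1 0 * v 1 0) ^+ 2 by ring.
by rewrite lerDr sqr_ge0.
Qed.

Lemma vnormD u v : vnorm (u + v) <= vnorm u + vnorm v.
Proof.
rewrite -[X in _ <= X]ger0_norm ?addr_ge0 ?vnorm_ge0 // -sqrtr_sqr {1}/vnorm.
rewrite ler_sqrt ?sqr_ge0 // sqrrD /vnorm !sqr_sqrtr ?addr_ge0 ?sqr_ge0 //.
have := dot2_le u v; rewrite /vnorm /dot2 !mxE => h.
set su := Num.sqrt _ in h *; set sv := Num.sqrt _ in h *.
move: h; move: su sv => su sv h.
rewrite !sqrrD; lra.
Qed.

Lemma opnorm_two M p q : det2 p q != 0 ->
  opnorm M <= (vnorm q * vnorm (M *m p) + vnorm p * vnorm (M *m q)) / `|det2 p q|.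
Proof.
move=> D0; apply: opnorm_le => z hz.
have Dp : 0 < `|det2 p q| by rewrite normr_gt0.
rewrite (decomp2 z D0) mulmxDr -!scalemxAr.
apply: (le_trans (vnormD _ _)); rewrite !vnormZ !normrM !normfV.
rewrite mulrDl; apply: lerD.
  rewrite [X in _ <= X]mulrAC; apply: ler_wpM2r; first exact: vnorm_ge0.
  rewrite ler_pM2r ?invr_gt0 //.
  by have := det2_le z q; rewrite hz mul1r.
rewrite [X in _ <= X]mulrAC; apply: ler_wpM2r; first exact: vnorm_ge0.
rewrite ler_pM2r ?invr_gt0 //.
by have := det2_le p z; rewrite hz mulr1.
Qed.

Lemma finmin (k : nat) (f : 'I_k -> R) : (forall i, 0 < f i) ->
  exists2 c, 0 < c & forall i, c <= f i.
Proof.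
move=> fp.
have S0 : 0 <= \sum_i (f i)^-1 by apply: sumr_ge0 => i _; rewrite invr_ge0 ltW.
exists (1 + \sum_i (f i)^-1)^-1; first by rewrite invr_gt0; lra.
move=> i; rewrite -[f i]invrK lef_pV2 ?posrE ?invr_gt0 //; last by lra.
rewrite (bigD1 i) //=.
have : 0 <= \sum_(j | j != i) (f j)^-1 by apply: sumr_ge0 => j _; rewrite invr_ge0 ltW.
lra.
Qed.

End P8.

Section P9.
Variable R : realType.
Variable k : nat.
Implicit Types (t s a b h x : R) (u v : 'cV[R]_2) (M : 'M[R]_2) (w : nat -> 'I_k).

Lemma final_num (N x Y s0 bk : R) : 0 < s0 -> 0 < bk -> 0 < Y -> 0 <= x -> 0 <= N ->
   N * (s0 * Y) <= Y * x + 1 -> s0 * Y <= x -> N * bk <= 2 * Y ->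
   N * s0 * bk <= 2 * x * (bk + 1).
Proof.
move=> s0p bkp Yp xp Np h1 h2 h3.
case: (lerP 1 (Y * x)) => hc.
  have : N * s0 * Y <= 2 * x * Y by nra.
  rewrite ler_pM2r // => h4. nra.
nra.
Qed.

Lemma scale_bound (s P Z V m del sn : R) : 0 <= del -> 0 <= P -> 0 <= Z -> 0 <= m ->
  V <= m * Z -> del <= sn -> s = del * P / (1 + m) ->
  s * V <= P * Z * sn.
Proof.
move=> d0 P0 Z0 m0 hV hd ->.
have m1 : 0 < 1 + m by lra.
have e : del * P / (1 + m) * ((1 + m) * Z) = del * P * Z by field; lra.
apply: (le_trans (y := del * P * Z)).
  rewrite -e; apply: ler_wpM2l; first by apply: divr_ge0; [apply: mulr_ge0|lra].
  by apply: (le_trans hV); apply: ler_wpM2r => //; lra.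
have := mulr_ge0 P0 Z0; nra.
Qed.

Variable A : 'I_k -> 'M[R]_2.
Hypothesis hSL : forall i, \det (A i) = 1.
Variable U : set R.
Hypothesis hper : forall t (m : int), U t -> U (t + m%:~R * pi).
Hypothesis hopen : forall s, U s -> exists2 r, 0 < r & forall y : R, `|y - s| < r -> U y.
Hypothesis hcl : forall i x, closure U x -> U (phiA (A i) x).
Variable td : R.
Hypothesis htd : ~ U td.
Variable x0 : R.
Hypothesis hx0 : U x0.

Lemma U_ang t : U t -> U (ang (dirv t)).
Proof. by have [m ->] := ang_dirv t; apply: hper. Qed.

Lemma nU_ang t : ~ U t -> ~ U (ang (dirv t)).
Proof.
have [m ->] := ang_dirv t => nU h; apply: nU.
have := hper (- m) h; by rewrite mulrNz mulNr addrK.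
Qed.

Lemma F1 i v : v != 0 -> U (ang v) -> U (ang (A i *m v)).
Proof.
move=> v0 Uv; have := hcl i (subset_closure Uv).
by rewrite /phiA -/(ang _) ang_mul.
Qed.

Lemma Fcl i v : v != 0 -> closure U (ang v) -> U (ang (A i *m v)).
Proof. by move=> v0 Uv; have := hcl i Uv; rewrite /phiA -/(ang _) ang_mul. Qed.

Lemma F1w w n v : v != 0 -> U (ang v) -> U (ang (Aw A w n *m v)).
Proof.
elim: n v => [|n IH] v v0 Uv; first by rewrite Aw_0 mul1mx.
rewrite Aw_S -mulmxA; apply: IH; first exact: mul_neq0.
exact: F1.
Qed.

Lemma Bunit M : \det M = 1 -> M \in unitmx.
Proof. by move=> h; rewrite unitmxE h unitr1. Qed.

Lemma main_est : exists2 c, 0 < c & forall w n,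
  c * opnorm (Aw A w n.+1) <= vnorm (Aw A w n.+1 *m dirv x0).
Proof.
set d := dirv td.
have d0 : d != 0 := dirv_neq0 td.
have nUd : ~ U (ang d) := nU_ang htd.
have vd : vnorm d = 1 := vnorm_dirv td.
set v0 := dirv x0.
have v00 : v0 != 0 := dirv_neq0 x0.
have Uv0 : U (ang v0) := U_ang hx0.
have vv0 : vnorm v0 = 1 := vnorm_dirv x0.
have hs0 : forall j, exists s, 0 < s /\ forall z, z != 0 -> ~ U (ang z) ->
    s * vnorm (invmx (A j) *m z) <= `|det2 (A j *m v0) z|.
  move=> j.
  have pj0 : A j *m v0 != 0 := mul_neq0 (hSL j) v00.
  have Upj := F1 j v00 Uv0.
  have [del del0 hdel] := gap hper (hopen Upj).
  have m0 := mb_ge0 (invmx (A j)).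
  exists (del * vnorm (A j *m v0) / (1 + mb (invmx (A j)))); split.
    by rewrite divr_gt0 ?mulr_gt0 ?vnorm_gt0 //; lra.
  move=> z z0 nUz; rewrite det2_ang //.
  apply: (scale_bound (m := mb (invmx (A j))) (Z := vnorm z) (del := del)) => //.
  - exact: ltW.
  - exact: vnorm_ge0.
  - exact: vnorm_ge0.
  - exact: vnorm_mul_le.
  - exact: hdel.
have [sf hsf] := choice hs0.
have [s0 s00 hs0m] := finmin (fun j => (hsf j).1).
have hS0 : forall j z, z != 0 -> ~ U (ang z) ->
    s0 * vnorm (invmx (A j) *m z) <= `|det2 (A j *m v0) z|.
  move=> j z z0 nUz; apply: le_trans ((hsf j).2 z z0 nUz).
  by apply: ler_wpM2r; [exact: vnorm_ge0 | exact: hs0m].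
have hb : forall i, exists b, 0 < b /\ forall u, u != 0 -> U (ang u) ->
    b * vnorm (A i *m u) <= `|det2 u (invmx (A i) *m d)|.
  move=> i; set e := invmx (A i) *m d.
  have Ae : A i *m e = d by rewrite /e mulKVmx // Bunit.
  have e0 : e != 0 by apply/eqP => e0; move/eqP: d0; apply; rewrite -Ae e0 mulmx0.
  have ncl : ~ closure U (ang e) by move=> cl; apply: nUd; rewrite -Ae; exact: Fcl.
  have perC : forall t (m : int), (~` U) t -> (~` U) (t + m%:~R * pi).
    move=> t m nUt hU; apply: nUt; have := hper (- m) hU.
    by rewrite mulrNz mulNr addrK.
  have [del del0 hdel] := gap perC (notcl_local ncl).
  have m0 := mb_ge0 (A i).
  exists (del * vnorm e / (1 + mb (A i))); split.
    by rewrite divr_gt0 ?mulr_gt0 ?vnorm_gt0 //; lra.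
  move=> u u0 Uu.
  have := det2_ang u0 e0 => ->.
  have -> : `|sin (ang e - ang u)| = `|sin (ang u - ang e)|.
    by rewrite -normrN -sinN opprB.
  rewrite [vnorm u * _]mulrC.
  apply: (scale_bound (m := mb (A i)) (Z := vnorm u) (del := del)) => //.
  - exact: ltW.
  - exact: vnorm_ge0.
  - exact: vnorm_ge0.
  - exact: vnorm_mul_le.
  - by apply: hdel => /=; apply.
have [bf hbf] := choice hb.
have [b b0 hbm] := finmin (fun i => (hbf i).1).
have hB : forall i u, u != 0 -> U (ang u) ->
    b * vnorm (A i *m u) <= `|det2 u (invmx (A i) *m d)|.
  move=> i u u0 Uu; apply: le_trans ((hbf i).2 u u0 Uu).
  by apply: ler_wpM2r; [exact: vnorm_ge0 | exact: hbm].
have [r r0 hr] := hopen hx0.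
set h := Num.min r pi / 2.
have hp := pi_gt0 R.
have h0 : 0 < h by rewrite divr_gt0 // lt_min r0 hp.
have hr' : h < r.
  have : Num.min r pi <= r by rewrite ge_min lexx.
  rewrite /h; lra.
have hpi : h < pi.
  have : Num.min r pi <= pi by rewrite ge_min lexx orbT.
  rewrite /h; lra.
set c2 := dirv (x0 + h).
have c20 : c2 != 0 := dirv_neq0 _.
have Uc2 : U (ang c2).
  apply: U_ang; apply: hr; rewrite addrC addKr ger0_norm; [exact: hr' | exact: ltW].
have vc2 : vnorm c2 = 1 := vnorm_dirv _.
set ka := sin h.
have ka0 : 0 < ka by apply: sin_gt0_pi; rewrite h0 hpi.
have dc2 : det2 v0 c2 = ka by rewrite det2_dirv addrC addKr.
exists (s0 * (b * ka) / (2 * (b * ka + 1))).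
  by rewrite divr_gt0 ?mulr_gt0 //; nra.
move=> w n.
set B := Aw A w n.+1.
have hdB : \det B = 1 := det_Aw hSL w n.+1.
have uB := Bunit hdB.
set y := invmx B *m d.
have By : B *m y = d by rewrite /y mulKVmx.
have y0 : y != 0 by apply/eqP => e0; move/eqP: d0; apply; rewrite -By e0 mulmx0.
set j := w n.
set z := A j *m y.
have Bz : Aw A w n *m z = d by rewrite /z mulmxA -Aw_S.
have z0 : z != 0 by apply/eqP => e0; move/eqP: d0; apply; rewrite -Bz e0 mulmx0.
have nUz : ~ U (ang z) by move=> Uz; apply: nUd; rewrite -Bz; exact: F1w.
have yz : invmx (A j) *m z = y by rewrite /z mulKmx // Bunit.
set Y := vnorm y.
have Y0 : 0 < Y := vnorm_gt0 y0.
set x := vnorm (B *m v0).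
have x0' : 0 <= x := vnorm_ge0 _.
have D1 : s0 * Y <= `|det2 v0 y|.
  have e1 : det2 (A j *m v0) z = det2 v0 y by rewrite /z det2M hSL mul1r.
  by have := hS0 j z z0 nUz; rewrite yz e1.
have X1 : s0 * Y <= x.
  apply: (le_trans D1); rewrite -(mul1r (det2 v0 y)) -hdB -det2M By.
  by have := det2_le (B *m v0) d; rewrite vd mulr1.
have Dpos : 0 < `|det2 v0 y| by apply: (lt_le_trans _ D1); rewrite mulr_gt0.
have N1 : opnorm B * (s0 * Y) <= Y * x + 1.
  have hD : det2 v0 y != 0 by rewrite -normr_gt0.
  have := opnorm_two B hD; rewrite By vd vv0 mulr1 -/x -/Y => hN.
  apply: (le_trans (y := opnorm B * `|det2 v0 y|)).
    by apply: ler_wpM2l => //; apply: (le_trans (vnorm_ge0 (B *m v0))); apply: opnorm_ub.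
  by rewrite -ler_pdivlMr.
have hC : forall c, c != 0 -> U (ang c) -> vnorm c = 1 -> b * vnorm (B *m c) <= Y.
  move=> c cn0 Uc vc.
  set i := w 0%N.
  set B' := Aw A (fun j => w j.+1) n.
  have BE : B = A i *m B' by rewrite /B Aw_Sl.
  set u := B' *m c.
  have u0 : u != 0 := mul_neq0 (det_Aw hSL _ n) cn0.
  have Uu : U (ang u) := F1w _ n cn0 Uc.
  have := hB i u u0 Uu.
  have -> : A i *m u = B *m c by rewrite BE mulmxA.
  have -> : det2 u (invmx (A i) *m d) = det2 c y.
    rewrite -(mul1r (det2 u _)) -(hSL i) -det2M mulKVmx ?Bunit //.
    by rewrite /u mulmxA -BE -By -(mul1r (det2 c y)) -hdB det2M.
  move/le_trans; apply.
  by have := det2_le c y; rewrite vc mul1r.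
have N2 : opnorm B * b * ka <= 2 * Y.
  have hD : det2 v0 c2 != 0 by rewrite dc2 lt0r_neq0.
  have := opnorm_two B hD; rewrite vc2 vv0 !mul1r dc2 gtr0_norm // => hN.
  have h1 := hC v0 v00 Uv0 vv0.
  have h2 := hC c2 c20 Uc2 vc2.
  have : opnorm B * ka <= vnorm (B *m v0) + vnorm (B *m c2) by rewrite -ler_pdivlMr.
  move=> h3.
  have : 0 <= b by lra.
  nra.
have N0 : 0 <= opnorm B.
  by apply: (le_trans (vnorm_ge0 (B *m v0))); apply: opnorm_ub.
have := final_num s00 (mulr_gt0 b0 ka0) Y0 x0' N0 N1 X1.
rewrite -mulrA in N2 => /(_ N2) hF.
rewrite mulrAC ler_pdivrMr; last by nra.
rewrite mulrC mulrA; nra.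
Qed.

End P9.

Section P10.
Variable R : realType.
Variable k : nat.
Variable A : 'I_k -> 'M[R]_2.
Hypothesis hSL : forall i, \det (A i) = 1.

Lemma inv_cvg0 : (fun n : nat => (n%:R : R)^-1) @ \oo --> 0.
Proof.
rewrite -cvg_shiftS; exact: cvg_harmonic.
Qed.

Lemma seq_limit (w : nat -> 'I_k) (x0 chiA c : R) (c0 : 0 < c)
  (hest : forall n, c * opnorm (Aw A w n.+1) <= vnorm (Aw A w n.+1 *m dirv x0))
  (hL : (fun n : nat => n%:R^-1 * ln (opnorm (Aw A w n))) @ \oo --> chiA) :
  (fun n : nat => - (n%:R^-1 * ln `|circ_deriv (phiw A w n) x0|)) @ \oo --> 2 * chiA.
Proof.
have hc0 : (fun n : nat => n%:R^-1 * ln c) @ \oo --> 0.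
  have := cvgM inv_cvg0 (cvg_cst (ln c)); rewrite mul0r; exact.
pose f := fun n : nat => 2 * (n%:R^-1 * ln (opnorm (Aw A w n))) + 2 * (n%:R^-1 * ln c).
pose hh := fun n : nat => 2 * (n%:R^-1 * ln (opnorm (Aw A w n))).
have hlow : f @ \oo --> 2 * chiA.
  have := cvgD (cvgM (cvg_cst (2 : R)) hL) (cvgM (cvg_cst (2 : R)) hc0).
  by rewrite mulr0 addr0; apply.
have hup : hh @ \oo --> 2 * chiA by exact: (cvgM (cvg_cst (2 : R)) hL).
apply: (squeeze_cvgr (f := f) (h := hh) _ hlow hup).
near=> n.
have hn : (0 < n)%N by near: n; exists 1%N.
rewrite /f /hh /=.
rewrite -(prednK hn); move: (n.-1) => m.
set B := Aw A w m.+1.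
have hdB : \det B = 1 := det_Aw hSL w m.+1.
have -> : phiw A w m.+1 = fun t => ang (B *m dirv t).
  by apply: funext => t; rewrite phiw_ang.
rewrite circ_deriv_ang //.
set u := B *m dirv x0.
have u0 : u != 0 := mul_neq0 hdB (dirv_neq0 x0).
set x := vnorm u.
have xp : 0 < x := vnorm_gt0 u0.
have ex : dot2 u u = x ^+ 2 by rewrite /x /vnorm sqr_sqrtr ?addr_ge0 ?sqr_ge0 // /dot2 !expr2.
rewrite ex ger0_norm ?invr_ge0 ?exprn_ge0 ?(ltW xp) //.
rewrite lnV ?posrE ?exprn_gt0 // lnXn //.
set N := opnorm B.
have hx := hest m; rewrite -/B -/u -/x -/N in hx.
have xN : x <= N by apply: opnorm_ub; exact: vnorm_dirv.
have Np : 0 < N by lra.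
have cNp : 0 < c * N by rewrite mulr_gt0.
have l1 : ln c + ln N <= ln x by rewrite -lnM ?posrE // ler_ln ?posrE.
have l2 : ln x <= ln N by rewrite ler_ln ?posrE.
have ni : 0 <= (m.+1%:R : R)^-1 by rewrite invr_ge0.
have h1 := ler_wpM2l ni l1; have h2 := ler_wpM2l ni l2.
rewrite mulrDr in h1.
rewrite mulr2n; move: h1 h2 ni; move: (m.+1%:R^-1 : R) => q h1 h2 ni.
apply/andP; split; nra.
Unshelve. all: by end_near.
Qed.

End P10.

Theorem lemma3p5 (R : realType) (k : nat) (A : 'I_k -> 'M[R]_2) (U : set R)
  (p : 'I_k -> R)
  (hSL : forall i, \det (A i) = 1)
  (hU : multicone A U)
  (hp : forall i, 0 < p i) (hp1 : \sum_i p i = 1)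
  (d : measure_display) (T : measurableType d) (P : probability T R)
  (X : nat -> T -> 'I_k) (hX : iid_law P p X)
  (chiA : R)
  (hchiA : {ae P, forall t,
     (fun n : nat => n%:R^-1 * ln (opnorm (Aw A (fun j => X j t) n))) @ \oo
       --> chiA})
  (x0 : R) (hx0 : U x0) :
  {ae P, forall t,
     (fun n : nat => - (n%:R^-1 * ln `|circ_deriv (phiw A (fun j => X j t) n) x0|))
       @ \oo --> 2 * chiA}.
Proof.
case: hU => [[n [a [b [n0 hab hUc hdis]]]] hcl].
have hper : forall t (m : int), U t -> U (t + m%:~R * pi).
  move=> t m /hUc [j [m' [h1 h2]]]; apply/hUc; exists j, (m' + m).
  by rewrite intrD mulrDl !addrA !ltrD2r.
have hopen : forall s, U s -> exists2 r, 0 < r & forall y : R, `|y - s| < r -> U y.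
  move=> s /hUc [j [m [h1 h2]]].
  exists (Num.min (s - (a j + m%:~R * pi)) (b j + m%:~R * pi - s)).
    by rewrite lt_min !subr_gt0 h1 h2.
  move=> y; rewrite lt_min !ltr_norml => /andP [/andP [l1 l2] /andP [l3 l4]].
  apply/hUc; exists j, m; move: h1 h2 l1 l2 l3 l4.
  move: (a j + m%:~R * pi) (b j + m%:~R * pi) => lo hi *; split; lra.
set j0 : 'I_n := Ordinal n0.
have htd : ~ U (b j0).
  move/hUc => [j [m [h1 h2]]].
  case: (boolP ((j0 != j) || (m != 0))) => hc.
    apply: (hdis j0 j m hc (b j0)); split; first exact: ltW.
    by split => //; split; exact: ltW.
  move/norP: hc => [/negPn/eqP ej /negPn/eqP em].
  by move: h2; rewrite -ej em mul0r addr0 ltxx.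
have [c c0 hest] := main_est hSL hper hopen hcl htd hx0.
move: hchiA; apply: filterS => t ht.
exact: (seq_limit hSL c0 (hest (fun j => X j t)) ht).
Qed.
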